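(* The following hold. (1) For every $n\ge 0$, the standard simplex $\Delta^n$ is acyclic. (2) If $X$ is an acyclic simplicial set and $Y\subset X$ is a subsimplicial set, then $Y$ is acyclic. (3) If $\{X_i\}_{i\in I}$ is a family of acyclic simplicial sets, then the product $\prod_{i\in I}X_i$ is acyclic. Consequently (together with (2)), the class of acyclic simplicial sets is closed under all limits in the category of simplicial sets. (4) If $\{X_i\}_{i\in I}$ is a family of acyclic simplicial sets, then the coproduct $\coprod_{i\in I}X_i$ is acyclic. (5) Let $X,Y,Z$ be simplicial sets with $Y$ and $Z$ acyclic, and let $f\colon X\to Y$ and $g\colon X\to Z$ be morphisms. Then the double mapping cylinder $Y\coprod_{X\times\{0\}}(X\times\Delta^1)\coprod_{X\times\{1\}}Z$ (glued along $f$ on $X\times\{0\}$ and along $g$ on $X\times\{1\}$) is acyclic. (6) If $X=\operatorname{colim}_{i\in I}X_i$ is a filtered colimit of simplicial sets and every $X_i$ is acyclic, then $X$ is acyclic.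
   Context: A (directed) graph is $G=(V,E,s,t)$ with sets $V,E$ and maps $s,t\colon E\to V$. A trail is a finite sequence $(e_1,\dots,e_n)$ of edges with $n\ge 1$ and $t(e_i)=s(e_{i+1})$ for $1\le i\le n-1$; it is closed if $s(e_1)=t(e_n)$. A graph is acyclic if it has no closed trail. For a simplicial set $X$, its associated graph $G_X$ has vertex set $X_0$, edge set the set of non-degenerate $1$-simplices of $X$, source $d_1$ and target $d_0$. A simplicial set $X$ is called acyclic if $G_X$ is acyclic (this is a purely combinatorial notion, unrelated to homology). *)

(* Defs.v *)
From mathcomp Require Import all_boot.
From Stdlib Require Import ProofIrrelevance FunctionalExtensionality.

Set Implicit Arguments.
Unset Strict Implicit.
Unset Printing Implicit Defensive.

(* The simplex category: objects [n] = {0,...,n} = 'I_n.+1,            *)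

Definition monob m n (f : {ffun 'I_m.+1 -> 'I_n.+1}) : bool :=
  [forall i : 'I_m.+1, forall j : 'I_m.+1, (i <= j) ==> (f i <= f j)].

Definition Dmap (m n : nat) := {f : {ffun 'I_m.+1 -> 'I_n.+1} | monob f}.

Lemma monoP m n (f : Dmap m n) (i j : 'I_m.+1) :
  i <= j -> val f i <= val f j.
Proof. by move: (valP f) => /forallP/(_ i)/forallP/(_ j)/implyP. Qed.

Lemma did_proof n : monob [ffun i : 'I_n.+1 => i].
Proof. by apply/forallP => i; apply/forallP => j; rewrite !ffunE; apply/implyP. Qed.

Definition did n : Dmap n n := exist (fun f => monob f) _ (did_proof n).

Lemma dcomp_proof m n p (g : Dmap n p) (f : Dmap m n) :
  monob [ffun i => val g (val f i)].
Proof.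
apply/forallP => i; apply/forallP => j; rewrite !ffunE; apply/implyP => hij.
by apply: monoP; apply: monoP.
Qed.

Definition dcomp m n p (g : Dmap n p) (f : Dmap m n) : Dmap m p :=
  exist (fun f => monob f) _ (dcomp_proof g f).

Lemma dconst_proof m n (k : 'I_n.+1) : monob [ffun _ : 'I_m.+1 => k].
Proof. by apply/forallP => i; apply/forallP => j; rewrite !ffunE leqnn implybT. Qed.

Definition dconst m n (k : 'I_n.+1) : Dmap m n := exist (fun f => monob f) _ (dconst_proof m k).

Lemma Dmap_eq m n (f g : Dmap m n) : (forall i, val f i = val g i) -> f = g.
Proof. by move=> h; apply: val_inj; apply/ffunP. Qed.

Lemma dcomp_id_r m n (g : Dmap m n) : dcomp g (did m) = g.
Proof. by apply: Dmap_eq => i; rewrite /= !ffunE. Qed.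

Lemma dcomp_assoc m n p q (h : Dmap p q) (g : Dmap n p) (f : Dmap m n) :
  dcomp h (dcomp g f) = dcomp (dcomp h g) f.
Proof. by apply: Dmap_eq => i; rewrite /= !ffunE. Qed.

Lemma dcomp_const_l m n p (k : 'I_p.+1) (f : Dmap m n) :
  dcomp (dconst n k) f = dconst m k.
Proof. by apply: Dmap_eq => i; rewrite /= !ffunE. Qed.

Record sSet := SSet {
  sob : nat -> Type;
  sact : forall m n, Dmap m n -> sob n -> sob m;
  sact_id : forall n (x : sob n), sact (did n) x = x;
  sact_comp : forall m n p (f : Dmap m n) (g : Dmap n p) (x : sob p),
      sact (dcomp g f) x = sact f (sact g x)
}.
Arguments sact : clear implicits.
Arguments sact X {m n} f x : rename.

Record sMap (X Y : sSet) := SMap {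
  smap :> forall n, sob X n -> sob Y n;
  smap_nat : forall m n (f : Dmap m n) (x : sob X n),
      smap (sact X f x) = sact Y f (smap x)
}.
Arguments smap : clear implicits.
Arguments smap {X Y} s n x : rename.

Record graph := Graph {
  gV : Type;
  gE : Type;
  gs : gE -> gV;
  gt : gE -> gV
}.

Fixpoint gchain (G : graph) (e : gE G) (es : seq (gE G)) : Prop :=
  match es with
  | [::] => True
  | e' :: es' => gt e = gs e' /\ gchain e' es'
  end.

Definition closed_trail (G : graph) (e : gE G) (es : seq (gE G)) : Prop :=
  gchain e es /\ gs e = gt (last e es).

Definition graph_acyclic (G : graph) : Prop :=
  forall (e : gE G) (es : seq (gE G)), ~ closed_trail e es.

Definition s0 (X : sSet) (v : sob X 0) : sob X 1 := sact X (dconst 1 (ord0 : 'I_1)) v.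
(* d_1 omits vertex 1, i.e. is induced by [0] -> [1], 0 |-> 0 *)
Definition d1 (X : sSet) (e : sob X 1) : sob X 0 := sact X (dconst 0 (ord0 : 'I_2)) e.
(* d_0 omits vertex 0, i.e. is induced by [0] -> [1], 0 |-> 1 *)
Definition d0 (X : sSet) (e : sob X 1) : sob X 0 := sact X (dconst 0 (ord_max : 'I_2)) e.

Definition nondegenerate1 (X : sSet) (e : sob X 1) : Prop :=
  ~ exists v : sob X 0, e = s0 v.

Definition assoc_graph (X : sSet) : graph :=
  @Graph (sob X 0) {e : sob X 1 | nondegenerate1 e}
         (fun e => d1 (proj1_sig e)) (fun e => d0 (proj1_sig e)).

Definition sacyclic (X : sSet) : Prop := graph_acyclic (assoc_graph X).

Definition Delta (n : nat) : sSet.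
Proof.
refine (@SSet (fun m => Dmap m n) (fun m p f g => dcomp g f) _ _).
- by move=> m g; rewrite dcomp_id_r.
- by move=> m p q f g h; rewrite dcomp_assoc.
Defined.

Record subsSet (X : sSet) := SubsSet {
  spred : forall n, sob X n -> Prop;
  spred_closed : forall m n (f : Dmap m n) (x : sob X n),
      spred x -> spred (sact X f x)
}.

Lemma sig_eqP (A : Type) (P : A -> Prop) (x y : {a | P a}) :
  proj1_sig x = proj1_sig y -> x = y.
Proof.
case: x => a pa; case: y => b pb /= eab; subst b; f_equal; apply: proof_irrelevance.
Qed.

Definition sub_sSet (X : sSet) (Y : subsSet X) : sSet.
Proof.
refine (@SSet (fun n => {x : sob X n | spred Y x})
          (fun m n f x => exist _ (sact X f (proj1_sig x))
                                  (spred_closed f (proj2_sig x))) _ _).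
- by move=> n x; apply: sig_eqP; rewrite /= sact_id.
- by move=> m n p f g x; apply: sig_eqP; rewrite /= sact_comp.
Defined.

Definition prod_sSet (I : Type) (X : I -> sSet) : sSet.
Proof.
refine (@SSet (fun n => forall i : I, sob (X i) n)
          (fun m n f x => fun i => sact (X i) f (x i)) _ _).
- by move=> n x; apply: functional_extensionality_dep => i; rewrite sact_id.
- by move=> m n p f g x; apply: functional_extensionality_dep => i; rewrite sact_comp.
Defined.

Definition coprod_sSet (I : Type) (X : I -> sSet) : sSet.
Proof.
refine (@SSet (fun n => {i : I & sob (X i) n})
          (fun m n f x => existT _ (projT1 x) (sact (X (projT1 x)) f (projT2 x))) _ _).
- by move=> n [i x] /=; rewrite sact_id.
- by move=> m n p f g [i x] /=; rewrite sact_comp.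
Defined.

Definition prod2 (X Y : sSet) : sSet.
Proof.
refine (@SSet (fun n => (sob X n * sob Y n)%type)
          (fun m n f x => (sact X f x.1, sact Y f x.2)) _ _).
- by move=> n [x y] /=; rewrite !sact_id.
- by move=> m n p f g [x y] /=; rewrite !sact_comp.
Defined.

Definition cyl_end (X : sSet) (k : 'I_2) : sMap X (prod2 X (Delta 1)).
Proof.
refine (@SMap X (prod2 X (Delta 1)) (fun n x => (x, dconst n k)) _).
by move=> m n f x /=; rewrite dcomp_const_l.
Defined.

(* Double mapping cylinder, via its universal property:                *)
(* P is the colimit of  Y <-f- X x{0} -> X x Delta^1 <- X x{1} -g-> Z  *)

Definition is_double_mapping_cylinder (X Y Z : sSet) (f : sMap X Y) (g : sMap X Z)
    (P : sSet) (jY : sMap Y P) (jZ : sMap Z P) (jC : sMap (prod2 X (Delta 1)) P) : Prop :=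
  (forall n (x : sob X n), jC n (cyl_end X ord0 n x) = jY n (f n x)) /\
  (forall n (x : sob X n), jC n (cyl_end X ord_max n x) = jZ n (g n x)) /\
  (forall (W : sSet) (a : sMap Y W) (b : sMap Z W) (c : sMap (prod2 X (Delta 1)) W),
     (forall n (x : sob X n), c n (cyl_end X ord0 n x) = a n (f n x)) ->
     (forall n (x : sob X n), c n (cyl_end X ord_max n x) = b n (g n x)) ->
     (exists h : sMap P W,
        (forall n y, h n (jY n y) = a n y) /\
        (forall n z, h n (jZ n z) = b n z) /\
        (forall n w, h n (jC n w) = c n w)) /\
     (forall h h' : sMap P W,
        (forall n y, h n (jY n y) = a n y) ->
        (forall n z, h n (jZ n z) = b n z) ->
        (forall n w, h n (jC n w) = c n w) ->
        (forall n y, h' n (jY n y) = a n y) ->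
        (forall n z, h' n (jZ n z) = b n z) ->
        (forall n w, h' n (jC n w) = c n w) ->
        forall n p, h n p = h' n p)).

Record Cat := MkCat {
  cob : Type;
  chom : cob -> cob -> Type;
  cid : forall i, chom i i;
  ccomp : forall i j k, chom j k -> chom i j -> chom i k;
  ccomp_id_l : forall i j (u : chom i j), ccomp (cid j) u = u;
  ccomp_id_r : forall i j (u : chom i j), ccomp u (cid i) = u;
  ccomp_assoc : forall i j k l (w : chom k l) (v : chom j k) (u : chom i j),
      ccomp w (ccomp v u) = ccomp (ccomp w v) u
}.
Arguments ccomp : clear implicits.
Arguments ccomp C {i j k} v u : rename.
Arguments cid : clear implicits.
Arguments cid C i : rename.
Arguments chom : clear implicits.
Arguments chom C i j : rename.

Record sDiagram (J : Cat) := SDiagram {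
  dob : cob J -> sSet;
  dmor : forall i j, chom J i j -> sMap (dob i) (dob j);
  dmor_id : forall i n (x : sob (dob i) n), dmor (cid J i) n x = x;
  dmor_comp : forall i j k (v : chom J j k) (u : chom J i j) n (x : sob (dob i) n),
      dmor (ccomp J v u) n x = dmor v n (dmor u n x)
}.
Arguments dmor : clear implicits.
Arguments dmor {J} D {i j} u : rename.

Definition is_cocone (J : Cat) (D : sDiagram J) (X : sSet)
    (c : forall i, sMap (dob D i) X) : Prop :=
  forall i j (u : chom J i j) n (x : sob (dob D i) n), c j n (dmor D u n x) = c i n x.

Definition is_colimit (J : Cat) (D : sDiagram J) (X : sSet)
    (c : forall i, sMap (dob D i) X) : Prop :=
  is_cocone c /\
  forall (W : sSet) (k : forall i, sMap (dob D i) W), is_cocone k ->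
    (exists h : sMap X W, forall i n x, h n (c i n x) = k i n x) /\
    (forall h h' : sMap X W,
        (forall i n x, h n (c i n x) = k i n x) ->
        (forall i n x, h' n (c i n x) = k i n x) ->
        forall n x, h n x = h' n x).

Definition is_cone (J : Cat) (D : sDiagram J) (L : sSet)
    (p : forall i, sMap L (dob D i)) : Prop :=
  forall i j (u : chom J i j) n (x : sob L n), dmor D u n (p i n x) = p j n x.

Definition is_limit (J : Cat) (D : sDiagram J) (L : sSet)
    (p : forall i, sMap L (dob D i)) : Prop :=
  is_cone p /\
  forall (W : sSet) (q : forall i, sMap W (dob D i)), is_cone q ->
    (exists h : sMap W L, forall i n x, p i n (h n x) = q i n x) /\
    (forall h h' : sMap W L,
        (forall i n x, p i n (h n x) = q i n x) ->
        (forall i n x, p i n (h' n x) = q i n x) ->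
        forall n x, h n x = h' n x).

Definition filtered (J : Cat) : Prop :=
  inhabited (cob J) /\
  (forall i j : cob J, exists k, inhabited (chom J i k) /\ inhabited (chom J j k)) /\
  (forall i j (u v : chom J i j), exists k (w : chom J j k), ccomp J w u = ccomp J w v).

(* Main.v *)
Require Import Defs.
From mathcomp Require Import all_boot.
From Stdlib Require Import Classical FunctionalExtensionality PropExtensionality ProofIrrelevance Relations Eqdep.
Set Implicit Arguments.
Unset Strict Implicit.
Unset Printing Implicit Defensive.

Definition E1 (X : sSet) (u w : sob X 0) : Prop :=
  exists e : sob X 1, nondegenerate1 e /\ d1 e = u /\ d0 e = w.

Lemma ord1_eq (i j : 'I_1) : i = j.
Proof. by apply: val_inj; case: i => [[|//] ?]; case: j => [[|//] ?]. Qed.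

Lemma dconst00 (k : 'I_1) : dconst 0 k = did 0.
Proof. by apply: Dmap_eq => i; rewrite /= !ffunE; apply: ord1_eq. Qed.

Lemma d1s0 (X : sSet) (v : sob X 0) : d1 (s0 v) = v.
Proof. by rewrite /d1 /s0 -sact_comp dcomp_const_l dconst00 sact_id. Qed.

Lemma d0s0 (X : sSet) (v : sob X 0) : d0 (s0 v) = v.
Proof. by rewrite /d0 /s0 -sact_comp dcomp_const_l dconst00 sact_id. Qed.

Lemma deg_s0d1 (X : sSet) (e : sob X 1) : ~ nondegenerate1 e -> e = s0 (d1 e).
Proof. move=> /NNPP [v ->]; by rewrite d1s0. Qed.

Lemma smap_s0 X Y (F : sMap X Y) v : F 1 (s0 v) = s0 (F 0 v).
Proof. by rewrite /s0 smap_nat. Qed.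
Lemma smap_d1 X Y (F : sMap X Y) v : F 0 (d1 v) = d1 (F 1 v).
Proof. by rewrite /d1 smap_nat. Qed.
Lemma smap_d0 X Y (F : sMap X Y) v : F 0 (d0 v) = d0 (F 1 v).
Proof. by rewrite /d0 smap_nat. Qed.

Lemma edge_crt (X : sSet) (e : sob X 1) : clos_refl_trans _ (@E1 X) (d1 e) (d0 e).
Proof.
case: (classic (nondegenerate1 e)) => H.
  by apply: rt_step; exists e.
rewrite (deg_s0d1 H) d1s0 d0s0; exact: rt_refl.
Qed.

Lemma trail_ct (X : sSet) (e : gE (assoc_graph X)) es :
  gchain e es -> clos_trans _ (@E1 X) (gs e) (gt (last e es)).
Proof.
elim: es e => [|e' es IH] e /=.
  move=> _; apply: t_step; exists (proj1_sig e); split => //; exact: (proj2_sig e).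
move=> [He Hc]; apply: (@t_trans _ _ _ (gt e)); last by have := IH _ Hc; rewrite /= -He.
apply: t_step; exists (proj1_sig e); split => //; exact: (proj2_sig e).
Qed.

Lemma ct_trail (X : sSet) u w : clos_trans _ (@E1 X) u w ->
  exists (e : gE (assoc_graph X)) es, gchain e es /\ gs e = u /\ gt (last e es) = w.
Proof.
move/clos_trans_t1n_iff; elim => [x y [e [He [H1 H0]]]|x y z [e [He [H1 H0]]] _ [e' [es [Hc [Hs Ht]]]]].
  by exists (exist _ e He), [::].
exists (exist _ e He), (e' :: es); split => //=; split => //.
by rewrite /= H0 -Hs.
Qed.

Lemma acyc_iff (X : sSet) : sacyclic X <-> forall v, ~ clos_trans _ (@E1 X) v v.
Proof.
split.
  move=> H v /ct_trail [e [es [Hc [Hs Ht]]]]; apply: (H e es); split => //.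
  by rewrite Hs Ht.
move=> H e es [Hc Hs]; apply: (H (gs e)); rewrite {2}Hs; exact: trail_ct.
Qed.

Lemma ct_map A B (R : A -> A -> Prop) (S : B -> B -> Prop) (F : A -> B) :
  (forall x y, R x y -> S (F x) (F y)) -> forall a b, clos_trans _ R a b -> clos_trans _ S (F a) (F b).
Proof.
move=> H a b; elim => [x y /H|x y z _ IH1 _ IH2]; [exact: t_step|exact: t_trans IH1 IH2].
Qed.

Lemma crt_map_edge X Y (F : sMap X Y) a b :
  clos_refl_trans _ (@E1 X) a b -> clos_refl_trans _ (@E1 Y) (F 0 a) (F 0 b).
Proof.
elim => [x y [e [_ [<- <-]]]|x|x y z _ IH1 _ IH2].
- rewrite !smap_d1 !smap_d0; exact: edge_crt.
- exact: rt_refl.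
- exact: rt_trans IH1 IH2.
Qed.

Lemma ct_crt A (R : A -> A -> Prop) x y z :
  clos_trans _ R x y -> clos_refl_trans _ R y z -> clos_trans _ R x z.
Proof.
move=> H1 H2; elim: H2 x H1 => [a b Hab|a|a b c _ IH1 _ IH2] x H.
- exact: t_trans H (t_step _ _ _ _ Hab).
- exact: H.
- exact: IH2 (IH1 _ H).
Qed.

Lemma family_acyclic (X : sSet) (I : Type) (Y : I -> sSet) (p : forall i, sMap X (Y i)) :
  (forall i, sacyclic (Y i)) ->
  (forall e : sob X 1, nondegenerate1 e -> exists i, nondegenerate1 (p i 1 e)) ->
  sacyclic X.
Proof.
move=> HY Hr; apply/acyc_iff => v /clos_trans_t1n_iff Hc.
have [w [[e [He [H1 H0]]] Hw]] : exists w, E1 v w /\ clos_refl_trans _ (@E1 X) w v.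
  inversion Hc as [y Hy|y z Hy Hz]; subst.
    by exists v; split => //; exact: rt_refl.
  by exists y; split => //; apply: clos_t_clos_rt; apply/clos_trans_t1n_iff.
have [i Hi] := Hr e He.
move/acyc_iff: (HY i) => /(_ (p i 0 v)); apply.
apply: (@ct_crt _ _ _ (p i 0 w)).
  apply: t_step; exists (p i 1 e); split => //; by rewrite -smap_d1 -smap_d0 H1 H0.
exact: crt_map_edge.
Qed.

Lemma inj_reflect (X : sSet) (I : Type) (Y : I -> sSet) (p : forall i, sMap X (Y i)) :
  (forall e e' : sob X 1, (forall i, p i 1 e = p i 1 e') -> e = e') ->
  (forall e : sob X 1, nondegenerate1 e -> exists i, nondegenerate1 (p i 1 e)).
Proof.
move=> Hinj e He; apply: NNPP => Hn; apply: He; exists (d1 e); apply: Hinj => i.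
have Hd : ~ nondegenerate1 (p i 1 e) by move=> H; apply: Hn; exists i.
by rewrite smap_s0 smap_d1 -deg_s0d1.
Qed.

Lemma height_acyclic (X : sSet) (h : sob X 0 -> nat) :
  (forall u w, E1 u w -> h u < h w) -> sacyclic X.
Proof.
move=> H; apply/acyc_iff => v Hc.
have G : forall a b, clos_trans _ (@E1 X) a b -> h a < h b.
  move=> a b; elim => [x y Hxy|x y z _ IH1 _ IH2]; first exact: H.
  exact: ltn_trans IH1 IH2.
have := G _ _ Hc.
by rewrite ltnn.
Qed.


Lemma I2_cases (i : 'I_2) : i = ord0 \/ i = ord_max.
Proof. case: i => [[|[|//]] ?]; [left|right]; exact: val_inj. Qed.

Lemma part1 n : sacyclic (Delta n).
Proof.
apply: (@height_acyclic (Delta n) (fun v : Dmap 0 n => nat_of_ord (val v ord0))).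
move=> u w [e [He [<- <-]]] /=; rewrite !ffunE.
rewrite ltn_neqAle (monoP e (leq0n _ : (ord0 : 'I_2) <= ord_max)) andbT.
apply/negP => /eqP Heq; apply: He; exists (d1 e); apply: Dmap_eq => i /=.
rewrite !ffunE; case: (I2_cases i) => ->; apply: val_inj => //=.
Qed.

Definition incl_map (X : sSet) (Y : subsSet X) : sMap (sub_sSet Y) X.
Proof. by refine (@SMap (sub_sSet Y) X (fun n x => proj1_sig x) _). Defined.

Lemma part2 (X : sSet) (Y : subsSet X) : sacyclic X -> sacyclic (sub_sSet Y).
Proof.
move=> HX; apply: (@family_acyclic _ unit (fun _ => X) (fun _ => incl_map Y)) => //.
apply: inj_reflect => e e' /(_ tt) H; exact: sig_eqP.
Qed.

Definition proj_map (I : Type) (X : I -> sSet) (i : I) : sMap (prod_sSet X) (X i).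
Proof. by refine (@SMap (prod_sSet X) (X i) (fun n x => x i) _). Defined.

Lemma part3 (I : Type) (X : I -> sSet) : (forall i, sacyclic (X i)) -> sacyclic (prod_sSet X).
Proof.
move=> HX; apply: (@family_acyclic _ I X (proj_map X)) => //.
apply: inj_reflect => e e' H; apply: functional_extensionality_dep; exact: H.
Qed.

Definition scomp (X Y Z : sSet) (g : sMap Y Z) (f : sMap X Y) : sMap X Z.
Proof.
refine (@SMap X Z (fun n x => g n (f n x)) _).
by move=> m n h x; rewrite !smap_nat.
Defined.

Definition yon (L : sSet) n (x : sob L n) : sMap (Delta n) L.
Proof.
refine (@SMap (Delta n) L (fun m f => sact L f x) _).
by move=> m p h f /=; rewrite sact_comp.
Defined.

Lemma part3' (J : Cat) (D : sDiagram J) (L : sSet) (p : forall i, sMap L (dob D i)) :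
  (forall i, sacyclic (dob D i)) -> is_limit p -> sacyclic L.
Proof.
move=> HD [Hcone Hlim]; apply: (@family_acyclic _ _ _ p) => //.
apply: inj_reflect => x y Hxy.
have Hq : is_cone (fun i => scomp (p i) (yon x)).
  by move=> i j u n f /=; rewrite Hcone.
have [_ Hu] := Hlim _ _ Hq.
have := Hu (yon x) (yon y) (fun _ _ _ => erefl) _ 1 (did 1).
rewrite /= !sact_id; apply=> i n f /=; by rewrite !smap_nat Hxy.
Qed.

Lemma part4 (I : Type) (X : I -> sSet) : (forall i, sacyclic (X i)) -> sacyclic (coprod_sSet X).
Proof.
move=> HX; apply/acyc_iff.
have G : forall a b, clos_trans _ (@E1 (coprod_sSet X)) a b ->
   forall i x, a = existT _ i x -> exists y, b = existT _ i y /\ clos_trans _ (@E1 (X i)) x y.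
  move=> a b; elim => [u w [[j e] [He [H1 H0]]]|u w z _ IH1 _ IH2] i x Hx.
    rewrite Hx in H1; rewrite -H0; move: H1 => /= H1.
    have Hj : j = i := f_equal (@projT1 _ _) H1.
    subst j; have Hd := inj_pair2 _ _ _ _ _ H1.
    exists (d0 e); split => //; apply: t_step; exists e; split => //.
    by move=> [v Hv]; apply: He; exists (existT _ i v); rewrite Hv.
  have [y [Hy Hc]] := IH1 _ _ Hx.
  have [y' [Hy' Hc']] := IH2 _ _ Hy.
  by exists y'; split => //; apply: t_trans Hc Hc'.
move=> [i x] /G /(_ i x erefl) [y [Hy Hc]].
have Hxy := inj_pair2 _ _ _ _ _ Hy; subst y.
by move/acyc_iff: (HX i) => /(_ x).
Qed.


Section Epi.
Variables (P : sSet) (Im : forall n, sob P n -> Prop)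
  (Hcl : forall m n (f : Dmap m n) x, Im x -> Im (sact P f x)).

Definition Wob n := {p : sob P n * Prop | Im p.1 -> ~ p.2}.

Lemma Wact_proof m n (f : Dmap m n) (p : Wob n) :
  Im (sact P f (proj1_sig p).1, (proj1_sig p).2 /\ ~ Im (sact P f (proj1_sig p).1)).1 ->
  ~ (sact P f (proj1_sig p).1, (proj1_sig p).2 /\ ~ Im (sact P f (proj1_sig p).1)).2.
Proof. by move=> /= H [_ H']. Qed.

Definition Wact m n (f : Dmap m n) (p : Wob n) : Wob m :=
  exist _ _ (@Wact_proof m n f p).

Definition Wsset : sSet.
Proof.
refine (@SSet Wob Wact _ _).
- move=> n [[x Q] HQ]; apply: sig_eqP => /=; rewrite sact_id; f_equal.
  apply: propositional_extensionality; split => [[]//|HQ']; split=> // /HQ; exact.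
- move=> m n p f g [[x Q] HQ]; apply: sig_eqP => /=; rewrite sact_comp; f_equal.
  apply: propositional_extensionality; split => [[H1 H2]|[[H1 H2] H3]]; split => //.
  split => // H; apply: H2; exact: Hcl.
Defined.

Definition hmap : sMap P Wsset.
Proof.
refine (@SMap P Wsset (fun n x => exist (fun p : sob P n * Prop => Im p.1 -> ~ p.2) (x, False) (fun _ (H : False) => H) : Wob n) _).
move=> m n f x; apply: sig_eqP => /=; f_equal.
by apply: propositional_extensionality; split => [|[]].
Defined.

Definition hmap' : sMap P Wsset.
Proof.
refine (@SMap P Wsset (fun n x => exist (fun p : sob P n * Prop => Im p.1 -> ~ p.2) (x, ~ Im x) (fun H H' => H' H) : Wob n) _).
move=> m n f x; apply: sig_eqP => /=; f_equal.
apply: propositional_extensionality; split => [H|[]//].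
split => // H'; apply: H; exact: Hcl.
Defined.

Lemma epi_surj : exists (W : sSet) (h h' : sMap P W),
  (forall n x, Im x -> h n x = h' n x) /\ (forall n x, h n x = h' n x -> Im x).
Proof.
exists Wsset, hmap, hmap'; split.
  move=> n x H; apply: sig_eqP => /=; f_equal.
  by apply: propositional_extensionality; split => [[]|].
move=> n x /(f_equal (fun p => (proj1_sig p).2)) /= H.
apply: NNPP => Hn; by rewrite H.
Qed.
End Epi.


Section TT.
Variables (Y : sSet) (nb bb : 'I_2) (Hb : nb != bb).

Definition allb n (s : Dmap n 1) : bool := [forall i, val s i == bb].

Lemma allb_comp m n (s : Dmap n 1) (f : Dmap m n) : allb s -> allb (dcomp s f).
Proof. by move=> /forallP H; apply/forallP => i /=; rewrite ffunE. Qed.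

Lemma allb_const n (s : Dmap n 1) k : (forall i, val s i = k) -> allb s = (k == bb).
Proof.
move=> H; apply/forallP/idP => [/(_ ord0)|Hk i]; first by rewrite H.
by rewrite H.
Qed.

Definition Tob n := {p : Dmap n 1 * option (sob Y n) | allb p.1 <-> p.2 = None}.

Lemma Tact_proof m n (f : Dmap m n) (p : Tob n) :
  let s := dcomp (proj1_sig p).1 f in
  allb s <-> (if allb s then None else omap (sact Y f) (proj1_sig p).2) = None.
Proof.
case: p => [[s o] /= Hp].
case E: (allb (dcomp s f)) => //; split => // H; exfalso.
case: o Hp H => [y|] Hp H //=.
by have := allb_comp f (proj2 Hp erefl); rewrite E.
Qed.

Definition Tact m n (f : Dmap m n) (p : Tob n) : Tob m :=
  exist (fun q : Dmap m 1 * option (sob Y m) => allb q.1 <-> q.2 = None)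
    (dcomp (proj1_sig p).1 f,
     if allb (dcomp (proj1_sig p).1 f) then None else omap (sact Y f) (proj1_sig p).2)
    (@Tact_proof m n f p).

Definition Tsset : sSet.
Proof.
refine (@SSet Tob Tact _ _).
- move=> n [[s o] Hp]; apply: sig_eqP => /=; rewrite dcomp_id_r.
  case E: (allb s); first by move: (proj1 Hp E) => /= ->.
  by case: o Hp => //= y _; rewrite sact_id.
- move=> m n p f g [[s o] Hp]; apply: sig_eqP => /=; rewrite dcomp_assoc.
  case E: (allb (dcomp (dcomp s g) f)) => //.
  case E': (allb (dcomp s g)); first by move: E; rewrite allb_comp.
  by case: o Hp => //= y _; rewrite sact_comp.
Defined.

Definition ht (t : sob Tsset 0) : nat := val (proj1_sig t).1 ord0.

Lemma E1_ht u w : E1 u w -> ht u <= ht w.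
Proof.
move=> [e [_ [<- <-]]]; rewrite /ht /= !ffunE.
exact: (monoP (proj1_sig e).1 (leq0n _ : (ord0 : 'I_2) <= ord_max)).
Qed.

Lemma ct_ht a b : clos_trans _ (@E1 Tsset) a b -> ht a <= ht b.
Proof. elim => [x y /E1_ht //|x y z _ H1 _ H2]; exact: leq_trans H1 H2. Qed.

Definition Req (u w : sob Tsset 0) := E1 u w /\ ht u = ht w.

Lemma ct_Req a b : clos_trans _ (@E1 Tsset) a b -> ht a = ht b -> clos_trans _ Req a b.
Proof.
move/clos_trans_t1n_iff; elim => [x y H Hh|x y z H Hc IH Hh].
  by apply: t_step.
have H1 := E1_ht H; have H2 := ct_ht (proj2 (clos_trans_t1n_iff _ _ _ _) Hc).
have Exy : ht x = ht y by apply/eqP; rewrite eqn_leq H1 /= Hh H2.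
apply: t_trans (t_step _ _ _ _ _) (IH _) => //; last by rewrite -Exy.
Qed.

Definition RY (u w : sob Tsset 0) := exists yu yw, (proj1_sig u).2 = Some yu /\
   (proj1_sig w).2 = Some yw /\ E1 yu yw.

Lemma s0d1_T (e : sob Tsset 1) :
  (forall i, val (proj1_sig e).1 i = val (proj1_sig e).1 ord0) ->
  proj1_sig (s0 (d1 e)) = ((proj1_sig e).1,
     if allb (proj1_sig e).1 then None else omap (fun y => s0 (d1 y)) (proj1_sig e).2).
Proof.
case: e => [[s o] Hp] /= Hc.
have Es : dcomp (dcomp s (dconst 0 (ord0 : 'I_2))) (dconst 1 (ord0 : 'I_1)) = s.
  by apply: Dmap_eq => i /=; rewrite !ffunE Hc.
rewrite Es (@allb_const _ (dcomp s _) (val s ord0)); last by move=> i /=; rewrite ffunE.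
rewrite (allb_const Hc); case: (_ == bb) => //.
by case: o Hp.
Qed.

Lemma Req_RY u w : Req u w -> RY u w.
Proof.
move=> [[e [He [Hu Hw]]] Hh].
have Hc : forall i, val (proj1_sig e).1 i = val (proj1_sig e).1 ord0.
  move: Hh; rewrite -Hu -Hw /ht /= !ffunE => Hh i.
  by case: (I2_cases i) => ->; apply: val_inj.
have Hs := s0d1_T Hc.
case E: (allb (proj1_sig e).1).
  exfalso; apply: He; exists (d1 e); apply: sig_eqP; rewrite Hs E.
  case: e {Hu Hw Hc Hs} E => [[s o] Hp] /= E.
  by move: (proj1 Hp E) => /= ->.
case Eo: (proj1_sig e).2 => [y|]; last by move: E; rewrite (proj2 (proj2_sig e) Eo).
exists (d1 y), (d0 y); split; [|split].
- rewrite -Hu /= Eo.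
  by rewrite (@allb_const _ (dcomp _ _) (val (proj1_sig e).1 ord0)) -?(allb_const Hc) ?E // => i /=; rewrite ffunE.
- rewrite -Hw /= Eo.
  by rewrite (@allb_const _ (dcomp _ _) (val (proj1_sig e).1 ord0)) -?(allb_const Hc) ?E // => i /=; rewrite ffunE Hc.
- exists y; split => //.
  move=> Hy; apply: He; exists (d1 e); apply: sig_eqP; rewrite Hs E Eo /=.
  have Hd : ~ nondegenerate1 y by move=> H; apply: H.
  rewrite -(deg_s0d1 Hd).
  by case: e {Hu Hw Hc Hs} E Eo => [[s o] Hp] /= E ->.
Qed.

Lemma ct_RY a b : clos_trans _ RY a b -> forall ya, (proj1_sig a).2 = Some ya ->
  exists yb, (proj1_sig b).2 = Some yb /\ clos_trans _ (@E1 Y) ya yb.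
Proof.
elim => [x y [yu [yw [Hu [Hw H]]]]|x y z _ IH1 _ IH2] ya Ha.
  exists yw; split => //; apply: t_step; move: Ha; rewrite Hu => [[<-]] //.
have [yb [Hb2 H1]] := IH1 _ Ha; have [yc [Hc H2]] := IH2 _ Hb2.
by exists yc; split => //; apply: t_trans H1 H2.
Qed.

Lemma ct_RY_some a b : clos_trans _ RY a b -> exists ya, (proj1_sig a).2 = Some ya.
Proof. elim => [x y [yu [yw [Hu _]]]|x y z _ IH1 _ _]; [by exists yu|exact: IH1]. Qed.

Lemma T_acyclic : sacyclic Y -> sacyclic Tsset.
Proof.
move=> HY; apply/acyc_iff => v Hc.
have HR : clos_trans _ RY v v.
  exact: (@ct_map _ _ Req RY id Req_RY _ _ (ct_Req Hc erefl)).
have [ya Ha] := ct_RY_some HR.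
have [yb [Hb2 HE]] := ct_RY HR Ha.
move: Hb2; rewrite Ha => [[Eb]]; subst yb.
by move/acyc_iff: HY => /(_ ya).
Qed.

Lemma allb_dconst n k : allb (dconst n k) = (k == bb).
Proof. by apply: allb_const => i /=; rewrite ffunE. Qed.

Lemma aT_proof n (y : sob Y n) :
  allb (dconst n nb, Some y).1 <-> (dconst n nb, Some y).2 = None.
Proof. by rewrite /= allb_dconst (negbTE Hb). Qed.

Definition aT : sMap Y Tsset.
Proof.
refine (@SMap Y Tsset (fun n y => exist (fun q : Dmap n 1 * option (sob Y n) => allb q.1 <-> q.2 = None) (dconst n nb, Some y) (@aT_proof n y) : Tob n) _).
move=> m n f y; apply: sig_eqP => /=; by rewrite dcomp_const_l allb_dconst (negbTE Hb).
Defined.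

Lemma aT_inj n (y y' : sob Y n) : aT n y = aT n y' -> y = y'.
Proof. by move=> /(f_equal (fun p => (proj1_sig p).2)) /= [->]. Qed.

Lemma bT_proof n (Y' : Type) :
  allb (dconst n bb, @None Y').1 <-> (dconst n bb, @None Y').2 = None.
Proof. by rewrite /= allb_dconst eqxx. Qed.

Definition bT (Z : sSet) : sMap Z Tsset.
Proof.
refine (@SMap Z Tsset (fun n z => exist (fun q : Dmap n 1 * option (sob Y n) => allb q.1 <-> q.2 = None) (dconst n bb, None) (@bT_proof n (sob Y n)) : Tob n) _).
move=> m n f y; apply: sig_eqP => /=; by rewrite dcomp_const_l allb_dconst eqxx.
Defined.

Lemma cT_proof (X : sSet) (F : sMap X Y) n (w : sob (prod2 X (Delta 1)) n) :
  allb (w.2, if allb w.2 then None else Some (F n w.1)).1 <->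
  (w.2, if allb w.2 then None else Some (F n w.1)).2 = None.
Proof. by rewrite /=; case: (allb w.2). Qed.

Definition cT (X : sSet) (F : sMap X Y) : sMap (prod2 X (Delta 1)) Tsset.
Proof.
refine (@SMap (prod2 X (Delta 1)) Tsset (fun n w => exist (fun q : Dmap n 1 * option (sob Y n) => allb q.1 <-> q.2 = None) (w.2, if allb w.2 then None else Some (F n w.1)) (@cT_proof X F n w) : Tob n) _).
move=> m n f [x s]; apply: sig_eqP => /=.
case E: (allb (dcomp s f)) => //.
case E': (allb s); first by move: E; rewrite allb_comp.
by rewrite smap_nat.
Defined.

Lemma cT_nb (X : sSet) (F : sMap X Y) n x : cT F n (cyl_end X nb n x) = aT n (F n x).
Proof. by apply: sig_eqP => /=; rewrite allb_dconst (negbTE Hb). Qed.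

Lemma cT_bb (X Z : sSet) (F : sMap X Y) n x z : cT F n (cyl_end X bb n x) = bT Z n z.
Proof. by apply: sig_eqP => /=; rewrite allb_dconst eqxx. Qed.

Lemma s0_T_const (t : sob Tsset 0) :
  val (proj1_sig (s0 t)).1 ord0 = val (proj1_sig (s0 t)).1 ord_max.
Proof. by rewrite /= !ffunE. Qed.

Lemma cT_val (X : sSet) (F : sMap X Y) n w : (proj1_sig (cT F n w)).1 = w.2.
Proof. by []. Qed.

End TT.


Lemma nondeg_comp (A B C : sSet) (j : sMap A B) (k : sMap A C) (y : sob A 1) :
  (forall y y' : sob A 1, k 1 y = k 1 y' -> y = y') ->
  nondegenerate1 (j 1 y) -> nondegenerate1 (k 1 y).
Proof.
move=> Hk Hj Hn; apply: Hj; exists (j 0 (d1 y)).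
have Hd : k 1 y = s0 (d1 (k 1 y)) by case: Hn => v ->; rewrite d1s0.
rewrite -smap_d1 -smap_s0 in Hd.
by rewrite {1}(Hk _ _ Hd) smap_s0.
Qed.

Lemma part5 (X Y Z : sSet) (f : sMap X Y) (g : sMap X Z)
          (P : sSet) (jY : sMap Y P) (jZ : sMap Z P) (jC : sMap (prod2 X (Delta 1)) P) :
      sacyclic Y -> sacyclic Z ->
      is_double_mapping_cylinder f g jY jZ jC -> sacyclic P.
Proof.
move=> HY HZ [E0 [E1' Hu]].
have Hb0 : (ord0 : 'I_2) != ord_max by [].
have Hb1 : (ord_max : 'I_2) != ord0 by [].
have [[hY [hY1 [hY2 hY3]]] _] := Hu _ (aT Y Hb0) (bT Y ord_max Z) (cT ord_max f)
   (fun n x => cT_nb Hb0 f x) (fun n x => cT_bb ord_max f x (g n x)).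
have [[hZ [hZ1 [hZ2 hZ3]]] _] := Hu _ (bT Z ord0 Y) (aT Z Hb1) (cT ord0 g)
   (fun n x => cT_bb ord0 g x (f n x)) (fun n x => cT_nb Hb1 g x).
pose Im := fun n (p : sob P n) => (exists y, p = jY n y) \/ (exists z, p = jZ n z) \/ (exists w, p = jC n w).
have Hcl : forall m n (h : Dmap m n) x, Im n x -> Im m (sact P h x).
  move=> m n h x [[y ->]|[[z ->]|[w ->]]]; rewrite -smap_nat /Im; eauto.
have Hsurj : forall n p, Im n p.
  have [W [h [h' [Hag Hdis]]]] := epi_surj Hcl.
  have [_ Hun] := Hu W (scomp h jY) (scomp h jZ) (scomp h jC)
     (fun n x => f_equal (h n) (E0 n x)) (fun n x => f_equal (h n) (E1' n x)).
  move=> n p; apply: Hdis; apply: (Hun h h') => // m q /=; symmetry; apply: Hag; rewrite /Im; eauto.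
apply: (@family_acyclic P bool (fun b => if b then Tsset Y ord_max else Tsset Z ord0)
          (fun b => if b return sMap P (if b then Tsset Y ord_max else Tsset Z ord0) then hY else hZ)).
  by case; apply: T_acyclic.
have CY : forall y, nondegenerate1 (jY 1 y) -> exists b : bool,
    nondegenerate1 ((if b return sMap P (if b then Tsset Y ord_max else Tsset Z ord0) then hY else hZ) 1 (jY 1 y)).
  move=> y Hy; exists true; rewrite /= hY1.
  by apply: (nondeg_comp (j:=jY)) => // ? ? /aT_inj.
have CZ : forall z, nondegenerate1 (jZ 1 z) -> exists b : bool,
    nondegenerate1 ((if b return sMap P (if b then Tsset Y ord_max else Tsset Z ord0) then hY else hZ) 1 (jZ 1 z)).
  move=> z Hz; exists false; rewrite /= hZ2.
  by apply: (nondeg_comp (j:=jZ)) => // ? ? /aT_inj.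
move=> e He; case: (Hsurj 1 e) => [[y Ey]|[[z Ez]|[[x s] Ew]]]; subst e.
- exact: CY.
- exact: CZ.
case: (eqVneq (val s ord0) (val s ord_max)) => Hs.
  have Hc : forall i, val s i = val s ord0.
    by move=> i; case: (I2_cases i) => ->.
  have Es : s = dconst 1 (val s ord0) by apply: Dmap_eq => i /=; rewrite ffunE Hc.
  case: (I2_cases (val s ord0)) => Hk; rewrite Hk in Es; rewrite Es in He *.
    change (jC 1 (x, dconst 1 ord0)) with (jC 1 (cyl_end X ord0 1 x)) in He |- *.
    by rewrite E0 in He *; apply: CY.
  change (jC 1 (x, dconst 1 ord_max)) with (jC 1 (cyl_end X ord_max 1 x)) in He |- *.
  by rewrite E1' in He *; apply: CZ.
exists true; rewrite /= hY3 => [[t Ht]].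
move: (s0_T_const t); rewrite -Ht /=.
by move/eqP: Hs.
Qed.


Section Filt.
Variables (J : Cat) (D : sDiagram J) (Hf : filtered J).

Definition SD n := {i : cob J & sob (dob D i) n}.

Definition sim n (a b : SD n) : Prop :=
  exists k (u : chom J (projT1 a) k) (w : chom J (projT1 b) k),
    dmor D u n (projT2 a) = dmor D w n (projT2 b).

Lemma sim_refl n (a : SD n) : sim a a.
Proof. by exists (projT1 a), (cid J _), (cid J _). Qed.

Lemma sim_sym n (a b : SD n) : sim a b -> sim b a.
Proof. by move=> [k [u [w H]]]; exists k, w, u. Qed.

Lemma sim_trans n (a b c : SD n) : sim a b -> sim b c -> sim a c.
Proof.
move=> [k1 [u1 [w1 H1]]] [k2 [u2 [w2 H2]]].
case: Hf => _ [Hp Hq].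
have [k3 [[r1] [r2]]] := Hp k1 k2.
have [k4 [s Hs]] := Hq _ _ (ccomp J r1 w1) (ccomp J r2 u2).
exists k4, (ccomp J s (ccomp J r1 u1)), (ccomp J s (ccomp J r2 w2)).
rewrite !dmor_comp H1 -H2 -!dmor_comp.
by rewrite -!ccomp_assoc Hs.
Qed.

Definition sactS m n (f : Dmap m n) (a : SD n) : SD m :=
  existT _ (projT1 a) (sact (dob D (projT1 a)) f (projT2 a)).

Lemma sim_act m n (f : Dmap m n) (a b : SD n) : sim a b -> sim (sactS f a) (sactS f b).
Proof. by move=> [k [u [w H]]]; exists k, u, w; rewrite /sactS /= !smap_nat H. Qed.

Lemma sim_dmor n i j (u : chom J i j) (x : sob (dob D i) n) :
  sim (existT _ i x) (existT _ j (dmor D u n x)).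
Proof. by exists j, u, (cid J j) => /=; rewrite dmor_id. Qed.

Definition WobF n := {P : SD n -> Prop | forall a b, P a -> sim b a -> P b}.

Lemma WactF_proof m n (f : Dmap m n) (P : WobF n) :
  forall a b, (fun b => exists a, proj1_sig P a /\ sim b (sactS f a)) a -> sim b a ->
    (fun b => exists a, proj1_sig P a /\ sim b (sactS f a)) b.
Proof.
move=> a b [a' [Ha Hs]] Hb; exists a'; split => //; exact: sim_trans Hb Hs.
Qed.

Definition WactF m n (f : Dmap m n) (P : WobF n) : WobF m := exist _ _ (@WactF_proof m n f P).

Lemma sactS_id n (a : SD n) : sactS (did n) a = a.
Proof. by case: a => i x; rewrite /sactS /= sact_id. Qed.

Lemma sactS_comp m n p (f : Dmap m n) (g : Dmap n p) (a : SD p) :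
  sactS (dcomp g f) a = sactS f (sactS g a).
Proof. by case: a => i x; rewrite /sactS /= sact_comp. Qed.

Definition WQ : sSet.
Proof.
refine (@SSet WobF WactF _ _).
- move=> n [P HP]; apply: sig_eqP => /=; apply: functional_extensionality => b.
  apply: propositional_extensionality; split.
    by move=> [a [Ha Hs]]; rewrite sactS_id in Hs; exact: HP Ha Hs.
  by move=> Hb; exists b; rewrite sactS_id; split => //; exact: sim_refl.
- move=> m n p f g [P HP]; apply: sig_eqP => /=; apply: functional_extensionality => b.
  apply: propositional_extensionality; split.
    move=> [a [Ha Hs]]; exists (sactS g a); split; last by rewrite -sactS_comp.
    by exists a; split => //; exact: sim_refl.
  move=> [a' [[a [Ha Hs]] Hs']]; exists a; split => //; rewrite sactS_comp.
  exact: sim_trans Hs' (sim_act f Hs).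
Defined.

Lemma cls_proof n (a : SD n) : forall b b', sim b a -> sim b' b -> sim b' a.
Proof. by move=> b b' H1 H2; exact: sim_trans H2 H1. Qed.

Definition cls n (a : SD n) : WobF n := exist _ (fun b => sim b a) (@cls_proof n a).

Definition kmap i : sMap (dob D i) WQ.
Proof.
refine (@SMap (dob D i) WQ (fun n x => cls (existT _ i x)) _).
move=> m n f x; apply: sig_eqP => /=; apply: functional_extensionality => b.
apply: propositional_extensionality; split.
  by move=> Hb; exists (existT _ i x); split => //; exact: sim_refl.
move=> [a [Ha Hs]]; apply: sim_trans Hs _; exact: (sim_act f Ha).
Defined.

Lemma kmap_cocone : is_cocone kmap.
Proof.
move=> i j u n x; apply: sig_eqP => /=; apply: functional_extensionality => b.
apply: propositional_extensionality; split => H.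
  apply: sim_trans H (sim_sym (sim_dmor u x)).
apply: sim_trans H (sim_dmor u x).
Qed.

Variables (X : sSet) (c : forall i, sMap (dob D i) X) (Hcol : is_colimit c).

Lemma crit n i j (x : sob (dob D i) n) (y : sob (dob D j) n) :
  c i n x = c j n y -> sim (existT _ i x) (existT _ j y).
Proof.
move=> H; case: Hcol => _ /(_ _ _ kmap_cocone) [[h Hh] _].
have := Hh i n x; rewrite H Hh => /(f_equal (fun P : WobF n => proj1_sig P (existT _ i x))) /=.
by move=> ->; exact: sim_refl.
Qed.

Lemma surj n (p : sob X n) : exists i x, p = c i n x.
Proof.
pose Im := fun n (p : sob X n) => exists i x, p = c i n x.
have Hcl : forall m n (h : Dmap m n) x, Im n x -> Im m (sact X h x).
  by move=> m n' h x [i [y ->]]; exists i, (sact _ h y); rewrite smap_nat.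
have [W [h [h' [Hag Hdis]]]] := epi_surj Hcl.
case: Hcol => Hco /(_ W (fun i => scomp h (c i))) [].
  by move=> i j u m x /=; rewrite Hco.
move=> _ Hun; apply: Hdis; apply: (Hun h h') => // i m x /=.
by symmetry; apply: Hag; exists i, x.
Qed.


Definition E1' k (s t : sob (dob D k) 0) : Prop :=
  exists e' : sob (dob D k) 1, nondegenerate1 (c k 1 e') /\ d1 e' = s /\ d0 e' = t.

Lemma E1'_map k l (u : chom J k l) s t : E1' s t -> E1' (dmor D u 0 s) (dmor D u 0 t).
Proof.
move=> [e' [He [<- <-]]]; exists (dmor D u 1 e'); split; last by rewrite !smap_d1 !smap_d0.
by case: Hcol => Hco _; rewrite Hco.
Qed.

Lemma E1'_E1 k s t : @E1' k s t -> E1 s t.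
Proof.
move=> [e' [He [H1 H0]]]; exists e'; split => //.
by move=> [v Hv]; apply: He; exists (c k 0 v); rewrite Hv smap_s0.
Qed.

Lemma step a a' i (x : sob (dob D i) 0) : E1 a a' -> c i 0 x = a ->
  exists m (p : chom J i m) x', c m 0 x' = a' /\ E1' (dmor D p 0 x) x'.
Proof.
move=> [e [He [H1 H0]]] Hx.
have [j [e1 Ee]] := surj e; subst e.
have := Hx; rewrite -H1 -smap_d1 => /crit [m [p [q /= Hpq]]].
exists m, p, (d0 (dmor D q 1 e1)); split.
  by rewrite smap_d0; case: Hcol => Hco _; rewrite Hco.
exists (dmor D q 1 e1); split; last by rewrite Hpq smap_d1.
by case: Hcol => Hco _; rewrite Hco.
Qed.

Lemma claim a b : clos_trans _ (@E1 X) a b -> forall i (x : sob (dob D i) 0), c i 0 x = a ->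
  exists k (u : chom J i k) y, c k 0 y = b /\ clos_trans _ (@E1' k) (dmor D u 0 x) y.
Proof.
move/clos_trans_t1n_iff; elim => [a0 b0 H|a0 b0 z H _ IH] i x Hx.
  have [m [p [x' [Hx' HE]]]] := step H Hx.
  by exists m, p, x'; split => //; apply: t_step.
have [m [p [x' [Hx' HE]]]] := step H Hx.
have [k [u [y [Hy Hc]]]] := IH _ _ Hx'.
exists k, (ccomp J u p), y; split => //.
rewrite dmor_comp; apply: t_trans (t_step _ _ _ _ (E1'_map u HE)) Hc.
Qed.

Lemma part6_main : (forall i, sacyclic (dob D i)) -> sacyclic X.
Proof.
move=> HD; apply/acyc_iff => a Hc.
have [i [x Hx]] := surj a.
have [k [u [y [Hy Hcy]]]] := claim Hc (esym Hx).
have : c k 0 y = c k 0 (dmor D u 0 x).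
  by case: Hcol => Hco _; rewrite Hco Hy.
move/crit => [l [p [q /= Hpq]]].
case: Hf => _ [_ Hq].
have [l' [r Hr]] := Hq _ _ p q.
have Hmap := @ct_map _ _ (@E1' k) (@E1' l') (dmor D (ccomp J r p) 0) (fun s t => @E1'_map _ _ (ccomp J r p) s t) _ _ Hcy.
have Heq : dmor D (ccomp J r p) 0 y = dmor D (ccomp J r p) 0 (dmor D u 0 x).
  by rewrite dmor_comp Hpq -dmor_comp Hr.
rewrite -Heq in Hmap.
move/acyc_iff: (HD l') => /(_ (dmor D (ccomp J r p) 0 y)); apply.
exact: (@ct_map _ _ (@E1' l') (@E1 _) id (fun s t => @E1'_E1 l' s t) _ _ Hmap).
Qed.

End Filt.


Theorem mainTheorem1 :
  (* (1) standard simplices *)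
  (forall n : nat, sacyclic (Delta n)) /\
  (* (2) subsimplicial sets *)
  (forall (X : sSet) (Y : subsSet X), sacyclic X -> sacyclic (sub_sSet Y)) /\
  (* (3) products *)
  (forall (I : Type) (X : I -> sSet),
      (forall i, sacyclic (X i)) -> sacyclic (prod_sSet X)) /\
  (* (3') consequently: closure under all (small) limits *)
  (forall (J : Cat) (D : sDiagram J) (L : sSet) (p : forall i, sMap L (dob D i)),
      (forall i, sacyclic (dob D i)) -> is_limit p -> sacyclic L) /\
  (* (4) coproducts *)
  (forall (I : Type) (X : I -> sSet),
      (forall i, sacyclic (X i)) -> sacyclic (coprod_sSet X)) /\
  (* (5) double mapping cylinders *)
  (forall (X Y Z : sSet) (f : sMap X Y) (g : sMap X Z)
          (P : sSet) (jY : sMap Y P) (jZ : sMap Z P) (jC : sMap (prod2 X (Delta 1)) P),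
      sacyclic Y -> sacyclic Z ->
      is_double_mapping_cylinder f g jY jZ jC -> sacyclic P) /\
  (* (6) filtered colimits *)
  (forall (J : Cat) (D : sDiagram J) (X : sSet) (c : forall i, sMap (dob D i) X),
      filtered J -> (forall i, sacyclic (dob D i)) -> is_colimit c -> sacyclic X).
Proof.
split; first exact: part1.
split; first exact: part2.
split; first exact: part3.
split; first exact: part3'.
split; first exact: part4.
split; first exact: part5.
move=> J D X c Hf HD Hcol; exact: (@part6_main J D Hf X c Hcol HD).
Qed.
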